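(* Let $R$ be a commutative ring with identity and $S$ a multiplicative subset of $R$. Let $\xi: 0\rightarrow A\rightarrow B\rightarrow C\rightarrow 0$ be a short $u$-$S$-exact sequence of $R$-modules in which $B$ is $u$-$S$-flat. Then $C$ is $u$-$S$-flat if and only if $\xi$ is $u$-$S$-pure.
   Context: A multiplicative subset $S$ satisfies $1\in S$ and is closed under products. An $R$-module $T$ is $u$-$S$-torsion if $sT=0$ for some $s\in S$. A short sequence $0\to A\xrightarrow{f}B\xrightarrow{g}C\to 0$ is $u$-$S$-exact if there is $s\in S$ with $s\,\mathrm{Ker}(f)=0$, $s\,\mathrm{Ker}(g)\subseteq\mathrm{Im}(f)$, $s\,\mathrm{Im}(f)\subseteq\mathrm{Ker}(g)$, $sC\subseteq\mathrm{Im}(g)$. It is $u$-$S$-pure if for every $R$-module $M$ the induced sequence $0\rightarrow M\otimes_RA\rightarrow M\otimes_RB\rightarrow M\otimes_RC\rightarrow 0$ is $u$-$S$-exact. An $R$-module $F$ is $u$-$S$-flat if for every short $u$-$S$-exact sequence $0\to X\to Y\to Z\to 0$ the induced sequence $0\to X\otimes_RF\to Y\otimes_RF\to Z\otimes_RF\to 0$ is $u$-$S$-exact; equivalently, $\mathrm{Tor}_1^R(M,F)$ is $u$-$S$-torsion for every $R$-module $M$. *)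

(* Defs.v *)
From mathcomp Require Import all_boot all_algebra.
Set Implicit Arguments. Unset Strict Implicit. Unset Printing Implicit Defensive.
Import GRing.Theory.
Local Open Scope ring_scope.

Definition multiplicative (R : comPzRingType) (S : R -> Prop) : Prop :=
  S 1 /\ (forall s t, S s -> S t -> S (s * t)).

Definition uS_torsion (R : comPzRingType) (S : R -> Prop) (T : lmodType R) :=
  exists2 s, S s & forall x : T, s *: x = 0.

Definition uS_exact (R : comPzRingType) (S : R -> Prop) (A B C : lmodType R)
  (f : A -> B) (g : B -> C) : Prop :=
  exists2 s, S s &
    [/\ (forall a, f a = 0 -> s *: a = 0),
        (forall b, g b = 0 -> exists a, f a = s *: b),
        (forall a, g (s *: f a) = 0) &
        (forall c, exists b, g b = s *: c)].

Definition bilinear_map (R : comPzRingType) (M A N : lmodType R)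
  (h : M -> A -> N) : Prop :=
  (forall r m1 m2 a, h (r *: m1 + m2) a = r *: h m1 a + h m2 a) /\
  (forall r m a1 a2, h m (r *: a1 + a2) = r *: h m a1 + h m a2).

Definition is_tensor (R : comPzRingType) (M A T : lmodType R)
  (t : M -> A -> T) : Prop :=
  bilinear_map t /\
  forall (N : lmodType R) (h : M -> A -> N), bilinear_map h ->
    (exists k : {linear T -> N}, forall m a, k (t m a) = h m a) /\
    (forall k1 k2 : {linear T -> N},
       (forall m a, k1 (t m a) = h m a) -> (forall m a, k2 (t m a) = h m a) ->
       forall x, k1 x = k2 x).

Definition tensor_left_uS_exact (R : comPzRingType) (S : R -> Prop)
  (M A B C : lmodType R) (f : A -> B) (g : B -> C) : Prop :=
  forall (TA TB TC : lmodType R) (tA : M -> A -> TA) (tB : M -> B -> TB)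
         (tC : M -> C -> TC),
    is_tensor tA -> is_tensor tB -> is_tensor tC ->
    forall (fT : {linear TA -> TB}) (gT : {linear TB -> TC}),
      (forall m a, fT (tA m a) = tB m (f a)) ->
      (forall m b, gT (tB m b) = tC m (g b)) ->
      uS_exact S fT gT.

Definition tensor_right_uS_exact (R : comPzRingType) (S : R -> Prop)
  (F X Y Z : lmodType R) (f : X -> Y) (g : Y -> Z) : Prop :=
  forall (TX TY TZ : lmodType R) (tX : X -> F -> TX) (tY : Y -> F -> TY)
         (tZ : Z -> F -> TZ),
    is_tensor tX -> is_tensor tY -> is_tensor tZ ->
    forall (fT : {linear TX -> TY}) (gT : {linear TY -> TZ}),
      (forall x u, fT (tX x u) = tY (f x) u) ->
      (forall y u, gT (tY y u) = tZ (g y) u) ->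
      uS_exact S fT gT.

Definition uS_pure (R : comPzRingType) (S : R -> Prop) (A B C : lmodType R)
  (f : A -> B) (g : B -> C) : Prop :=
  forall M : lmodType R, tensor_left_uS_exact S M f g.

Definition uS_flat (R : comPzRingType) (S : R -> Prop) (F : lmodType R) : Prop :=
  forall (X Y Z : lmodType R) (f : {linear X -> Y}) (g : {linear Y -> Z}),
    uS_exact S f g -> tensor_right_uS_exact S F f g.

(* Main.v *)
Require Import Defs.
From mathcomp Require Import all_boot all_algebra.
From HB Require Import structures.
From mathcomp Require Import boolp ring.

Module UsHelpers.
Set Implicit Arguments. Unset Strict Implicit. Unset Printing Implicit Defensive.
Import GRing.Theory.
Local Open Scope ring_scope.

Record qdata (R : pzRingType) := QData {
  qX : Type; qe : qX -> qX -> Prop;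
  qadd : qX -> qX -> qX; qopp : qX -> qX; qzero : qX; qscale : R -> qX -> qX;
  qe_refl : forall x, qe x x;
  qe_sym : forall x y, qe x y -> qe y x;
  qe_trans : forall x y z, qe x y -> qe y z -> qe x z;
  qadd_e : forall x x' y y', qe x x' -> qe y y' -> qe (qadd x y) (qadd x' y');
  qopp_e : forall x x', qe x x' -> qe (qopp x) (qopp x');
  qscale_e : forall r x x', qe x x' -> qe (qscale r x) (qscale r x');
  qaddA : forall x y z, qe (qadd x (qadd y z)) (qadd (qadd x y) z);
  qaddC : forall x y, qe (qadd x y) (qadd y x);
  qadd0 : forall x, qe (qadd qzero x) x;
  qaddN : forall x, qe (qadd (qopp x) x) qzero;
  qscaleA : forall a b x, qe (qscale a (qscale b x)) (qscale (a*b) x);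
  qscale1 : forall x, qe (qscale 1 x) x;
  qscaleDr : forall a x y, qe (qscale a (qadd x y)) (qadd (qscale a x) (qscale a y));
  qscaleDl : forall a b x, qe (qscale (a+b) x) (qadd (qscale a x) (qscale b x)) }.

Arguments qe {R} q _ _. Arguments qadd {R} q _ _. Arguments qopp {R} q _.
Arguments qzero {R} q. Arguments qscale {R} q _ _.
Definition quot (R : pzRingType) (d : qdata R) := {P : qX d -> Prop | exists x, P = qe d x}.
HB.instance Definition _ R d := gen_eqMixin (@quot R d).
HB.instance Definition _ R d := gen_choiceMixin (@quot R d).

Lemma sig_eqP (A : Type) (P : A -> Prop) (a b : sig P) : proj1_sig a = proj1_sig b -> a = b.
Proof. case: a => x px; case: b => y py /= e; subst y; congr exist; exact: Prop_irrelevance. Qed.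

Section QuotTheory.
Variables (R : pzRingType) (d : qdata R).
Local Notation Q := (quot d).
Definition cls (x : qX d) : Q := exist _ (qe d x) (ex_intro _ x erefl).
Definition rep (q : Q) : qX d := proj1_sig (cid (proj2_sig q)).
Lemma clsK q : cls (rep q) = q.
Proof.
rewrite /rep; case: (cid _) => x /= hx; case: q hx => P hP /= hx.
subst P; congr exist; exact: Prop_irrelevance.
Qed.
Lemma cls_eq x y : cls x = cls y <-> qe d x y.
Proof.
split.
  move=> h; have : proj1_sig (cls x) y by rewrite h /=; exact: qe_refl.
  by [].
move=> h; rewrite /cls.
have E : qe d x = qe d y.
  apply: funext => z; apply: propext; split => hz.
    exact: qe_trans (qe_sym h) hz.
  exact: qe_trans h hz.
exact: sig_eqP.
Qed.
Lemma repK x : qe d (rep (cls x)) x.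
Proof. by apply/cls_eq; rewrite clsK. Qed.
Lemma quot_ind (P : Q -> Prop) : (forall x, P (cls x)) -> forall q, P q.
Proof. by move=> h q; rewrite -(clsK q). Qed.

Definition qa (p q : Q) := cls (qadd d (rep p) (rep q)).
Definition qo (p : Q) := cls (qopp d (rep p)).
Definition qz : Q := cls (qzero d).
Definition qs (r : R) (p : Q) := cls (qscale d r (rep p)).
Lemma qaE x y : qa (cls x) (cls y) = cls (qadd d x y).
Proof. by apply/cls_eq; apply: qadd_e; apply: repK. Qed.
Lemma qoE x : qo (cls x) = cls (qopp d x).
Proof. by apply/cls_eq; apply: qopp_e; apply: repK. Qed.
Lemma qsE r x : qs r (cls x) = cls (qscale d r x).
Proof. by apply/cls_eq; apply: qscale_e; apply: repK. Qed.

Lemma qaA : associative qa.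
Proof.
elim/quot_ind=> x; elim/quot_ind=> y; elim/quot_ind=> z.
rewrite !qaE; apply/cls_eq; exact: qaddA.
Qed.
Lemma qaC : commutative qa.
Proof. elim/quot_ind=> x; elim/quot_ind=> y; rewrite !qaE; apply/cls_eq; exact: qaddC. Qed.
Lemma qa0 : left_id qz qa.
Proof. elim/quot_ind=> x; rewrite !qaE; apply/cls_eq; exact: qadd0. Qed.
Lemma qaN : left_inverse qz qo qa.
Proof. elim/quot_ind=> x; rewrite qoE !qaE; apply/cls_eq; exact: qaddN. Qed.
End QuotTheory.

HB.instance Definition _ R d := GRing.isZmodule.Build (@quot R d) (@qaA R d) (@qaC R d) (@qa0 R d) (@qaN R d).

Section QuotTheory2.
Variables (R : pzRingType) (d : qdata R).
Local Notation Q := (quot d).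
Lemma clsD' x y : cls x + cls y = cls (qadd d x y) :> quot d.
Proof. exact: qaE. Qed.
Lemma qsA a b (v : Q) : qs a (qs b v) = qs (a * b) v.
Proof. elim/quot_ind: v => x; rewrite !qsE; apply/cls_eq; exact: qscaleA. Qed.
Lemma qs1 : left_id 1 (@qs R d).
Proof. elim/quot_ind=> x; rewrite !qsE; apply/cls_eq; exact: qscale1. Qed.
Lemma qsDr : right_distributive (@qs R d) +%R.
Proof.
move=> a; elim/quot_ind=> x; elim/quot_ind=> y.
rewrite clsD' !qsE clsD'; apply/cls_eq; exact: qscaleDr.
Qed.
Lemma qsDl v : {morph (@qs R d)^~ v : a b / a + b}.
Proof. elim/quot_ind: v => x a b; rewrite !qsE clsD'; apply/cls_eq; exact: qscaleDl. Qed.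
End QuotTheory2.

HB.instance Definition _ R d := GRing.Zmodule_isLmodule.Build R (@quot R d) (@qsA R d) (@qs1 R d) (@qsDr R d) (@qsDl R d).

Section QuotLemmas.
Variables (R : pzRingType) (d : qdata R).
Lemma clsD x y : cls x + cls y = cls (qadd d x y) :> quot d.
Proof. exact: qaE. Qed.
Lemma clsZ r x : r *: cls x = cls (qscale d r x) :> quot d.
Proof. exact: qsE. Qed.
Lemma cls0 : 0 = cls (qzero d) :> quot d.
Proof. by []. Qed.
End QuotLemmas.

Definition linP (R : pzRingType) (U V : lmodType R) (f : U -> V) :=
  forall r x y, f (r *: x + y) = r *: f x + f y.
Definition mkl (R : pzRingType) (U V : lmodType R) (f : U -> V) (pf : linP f) : U -> V := f.
HB.instance Definition _ (R : pzRingType) (U V : lmodType R) (f : U -> V) (pf : linP f) :=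
  GRing.isLinear.Build R U V *:%R (mkl pf) pf.
Lemma mklE (R : pzRingType) (U V : lmodType R) (f : U -> V) (pf : linP f) x : (mkl pf : {linear U -> V}) x = f x.
Proof. by []. Qed.

Section Bil.
Variables (R : comPzRingType) (U V N : lmodType R) (h : U -> V -> N).
Hypothesis hb : bilinear_map h.
Lemma bil_0l v : h 0 v = 0.
Proof.
have := hb.1 1 0 0 v; rewrite !scale1r addr0 => E.
by apply: (@addrI _ (h 0 v)); rewrite addr0 -E.
Qed.
Lemma bil_0r u : h u 0 = 0.
Proof.
have := hb.2 1 u 0 0; rewrite !scale1r addr0 => E.
by apply: (@addrI _ (h u 0)); rewrite addr0 -E.
Qed.
Lemma bil_Zl r u v : h (r *: u) v = r *: h u v.
Proof. by have := hb.1 r u 0 v; rewrite addr0 bil_0l addr0. Qed.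
Lemma bil_Zr r u v : h u (r *: v) = r *: h u v.
Proof. by have := hb.2 r u v 0; rewrite addr0 bil_0r addr0. Qed.
Lemma bil_Dl u1 u2 v : h (u1 + u2) v = h u1 v + h u2 v.
Proof. by have := hb.1 1 u1 u2 v; rewrite !scale1r. Qed.
Lemma bil_Dr u v1 v2 : h u (v1 + v2) = h u v1 + h u v2.
Proof. by have := hb.2 1 u v1 v2; rewrite !scale1r. Qed.
End Bil.

Section TensorDef.
Variables (R : comPzRingType) (U V : lmodType R).
Definition tev (N : lmodType R) (h : U -> V -> N) (l : seq (U * V)) : N :=
  \sum_(x <- l) h x.1 x.2.
Definition teqv (l1 l2 : seq (U * V)) : Prop :=
  forall (N : lmodType R) (h : U -> V -> N), bilinear_map h -> tev h l1 = tev h l2.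
Definition tscale (r : R) (l : seq (U * V)) := map (fun x => (r *: x.1, x.2)) l.
Lemma tev_cat (N : lmodType R) (h : U -> V -> N) l1 l2 : tev h (l1 ++ l2) = tev h l1 + tev h l2.
Proof. by rewrite /tev big_cat. Qed.
Lemma tev_scale (N : lmodType R) (h : U -> V -> N) r l : bilinear_map h -> tev h (tscale r l) = r *: tev h l.
Proof.
move=> hb; rewrite /tev big_map scaler_sumr; apply: eq_bigr => x _.
exact: bil_Zl.
Qed.
Lemma tev_nil (N : lmodType R) (h : U -> V -> N) : tev h [::] = 0.
Proof. by rewrite /tev big_nil. Qed.

Definition tdata : qdata R.
refine (@QData R (seq (U * V)) teqv cat (tscale (-1)) [::] tscale _ _ _ _ _ _ _ _ _ _ _ _ _ _);
  rewrite /teqv.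
- by [].
- by move=> x y H N h hb; rewrite H.
- by move=> x y z H1 H2 N h hb; rewrite H1 ?H2.
- by move=> x x' y y' H1 H2 N h hb; rewrite !tev_cat H1 ?H2.
- by move=> x x' H N h hb; rewrite !tev_scale ?H.
- by move=> r x x' H N h hb; rewrite !tev_scale ?H.
- by move=> x y z N h hb; rewrite !tev_cat addrA.
- by move=> x y N h hb; rewrite !tev_cat addrC.
- by move=> x N h hb; rewrite tev_cat tev_nil add0r.
- by move=> x N h hb; rewrite tev_cat tev_scale // tev_nil scaleN1r addNr.
- by move=> a b x N h hb; rewrite !tev_scale // scalerA.
- by move=> x N h hb; rewrite tev_scale // scale1r.
- by move=> a x y N h hb; rewrite !(tev_scale, tev_cat) // scalerDr.
- by move=> a b x N h hb; rewrite !(tev_scale, tev_cat) // scalerDl.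
Defined.

Definition Tens : lmodType R := quot tdata.
Definition tt (u : U) (v : V) : Tens := @cls _ tdata [:: (u, v)].

Lemma tclsE (l : seq (U * V)) : @cls _ tdata l = \sum_(x <- l) tt x.1 x.2.
Proof.
elim: l => [|x l IH]; first by rewrite big_nil.
rewrite big_cons -IH /tt clsD'.
by case: x.
Qed.

Lemma tdata_add l1 l2 : qadd tdata l1 l2 = l1 ++ l2. Proof. by []. Qed.
Lemma tdata_scale r l : qscale tdata r l = tscale r l. Proof. by []. Qed.
Lemma tev1 (N : lmodType R) (h : U -> V -> N) u v : tev h [:: (u, v)] = h u v.
Proof. by rewrite /tev big_seq1. Qed.

Lemma tt_bil : bilinear_map tt.
Proof.
split.
- move=> r m1 m2 a; rewrite /tt clsZ clsD'; apply/cls_eq => N h hb.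
  by rewrite tdata_add tdata_scale tev_cat tev_scale // !tev1 (hb.1).
- move=> r m a1 a2; rewrite /tt clsZ clsD'; apply/cls_eq => N h hb.
  by rewrite tdata_add tdata_scale tev_cat tev_scale // !tev1 (hb.2).
Qed.

Lemma Tens_is_tensor : is_tensor tt.
Proof.
split; first exact: tt_bil.
move=> N h hb; split.
- pose k (q : Tens) : N := tev h (rep q).
  have kE l : k (@cls _ tdata l) = tev h l.
    by rewrite /k; apply: (repK (d := tdata) l).
  have kl : linP k.
    move=> r; elim/quot_ind => x; elim/quot_ind => y.
    rewrite clsZ clsD' !kE tev_cat tev_scale //.
  exists (mkl kl) => m a.
  by rewrite mklE /tt kE /tev big_cons big_nil addr0.
- move=> k1 k2 h1 h2; elim/quot_ind => l.
  rewrite tclsE !raddf_sum; apply: eq_bigr => x _.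
  exact: (etrans (h1 _ _) (esym (h2 _ _))).
Qed.
End TensorDef.

Section Gen.
Variable R : comPzRingType.

Lemma bil_Nr (U V N : lmodType R) (h : U -> V -> N) : bilinear_map h ->
  forall u v, h u (- v) = - h u v.
Proof. by move=> hb u v; rewrite -scaleN1r (bil_Zr hb) scaleN1r. Qed.
Lemma bil_Br (U V N : lmodType R) (h : U -> V -> N) : bilinear_map h ->
  forall u v1 v2, h u (v1 - v2) = h u v1 - h u v2.
Proof. by move=> hb u v1 v2; rewrite (bil_Dr hb) (bil_Nr hb). Qed.

Lemma lin_comp_bil (U V T N : lmodType R) (t : U -> V -> T) (k : {linear T -> N}) :
  bilinear_map t -> bilinear_map (fun u v => k (t u v)).
Proof.
move=> tb; split.
- by move=> r m1 m2 a; rewrite (tb.1) linearP.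
- by move=> r m a1 a2; rewrite (tb.2) linearP.
Qed.

Lemma tens_ext (U V T N : lmodType R) (t : U -> V -> T) (k1 k2 : {linear T -> N}) :
  is_tensor t -> (forall u v, k1 (t u v) = k2 (t u v)) -> forall x, k1 x = k2 x.
Proof.
move=> [tb tu] H; have hb := lin_comp_bil k1 tb.
by apply: (tu _ _ hb).2 => // m a; rewrite H.
Qed.

Lemma tens_map2 (U V1 V2 T1 T2 : lmodType R) (t1 : U -> V1 -> T1) (t2 : U -> V2 -> T2)
  (phi : {linear V1 -> V2}) : is_tensor t1 -> bilinear_map t2 ->
  exists F : {linear T1 -> T2}, forall u a, F (t1 u a) = t2 u (phi a).
Proof.
move=> [_ tu] tb.
have hb : bilinear_map (fun u a => t2 u (phi a)).
  split; first by move=> r m1 m2 a; rewrite (tb.1).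
  by move=> r m a1 a2; rewrite linearP (tb.2).
exact: (tu _ _ hb).1.
Qed.

Lemma tens_map1 (U1 U2 V T1 T2 : lmodType R) (t1 : U1 -> V -> T1) (t2 : U2 -> V -> T2)
  (phi : {linear U1 -> U2}) : is_tensor t1 -> bilinear_map t2 ->
  exists F : {linear T1 -> T2}, forall u a, F (t1 u a) = t2 (phi u) a.
Proof.
move=> [_ tu] tb.
have hb : bilinear_map (fun u a => t2 (phi u) a).
  split; last by move=> r m a1 a2; rewrite (tb.2).
  by move=> r m1 m2 a; rewrite linearP (tb.1).
exact: (tu _ _ hb).1.
Qed.

Lemma tens_flip (U V T : lmodType R) (t : U -> V -> T) :
  is_tensor t -> is_tensor (fun v u => t u v).
Proof.
move=> [[tb1 tb2] tu]; split; first by split => *; rewrite ?tb1 ?tb2.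
move=> N h [hb1 hb2].
have hb' : bilinear_map (fun u v => h v u) by split => *; rewrite ?hb1 ?hb2.
have [[k hk] ku] := tu N _ hb'.
split; first by exists k.
by move=> k1 k2 h1 h2; apply: ku.
Qed.

Section QIm.
Variables (W V : lmodType R) (phi : {linear W -> V}).
Definition qimE (x y : V) := exists w, x - y = phi w.
Lemma qimE_eq x y : x = y -> qimE x y.
Proof. by move=> ->; exists 0; rewrite subrr linear0. Qed.

Definition qimd : qdata R.
refine (@QData R V qimE +%R -%R 0 *:%R _ _ _ _ _ _ _ _ _ _ _ _ _ _).
- by move=> x; apply: qimE_eq.
- by move=> x y [w hw]; exists (- w); rewrite [phi _]linearN -hw opprB.
- move=> x y z [w1 h1] [w2 h2]; exists (w1 + w2); rewrite linearD -h1 -h2.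
  by rewrite addrA subrK.
- move=> x x' y y' [w1 h1] [w2 h2]; exists (w1 + w2); rewrite linearD -h1 -h2.
  by rewrite opprD addrACA.
- by move=> x x' [w h]; exists (- w); rewrite [phi _]linearN -h opprB opprK addrC.
- move=> r x x' [w h]; exists (r *: w); by rewrite [phi _]linearZ -h -scalerBr.
- by move=> *; apply: qimE_eq; rewrite addrA.
- by move=> *; apply: qimE_eq; rewrite addrC.
- by move=> *; apply: qimE_eq; rewrite add0r.
- by move=> *; apply: qimE_eq; rewrite addNr.
- by move=> *; apply: qimE_eq; rewrite scalerA.
- by move=> *; apply: qimE_eq; rewrite scale1r.
- by move=> *; apply: qimE_eq; rewrite scalerDr.
- by move=> *; apply: qimE_eq; rewrite scalerDl.
Defined.

Definition qim : lmodType R := quot qimd.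
Definition qpi (x : V) : qim := @cls _ qimd x.
Lemma qpi_lin : linP qpi.
Proof. by move=> r x y; rewrite /qpi clsZ clsD'. Qed.
Lemma qpi0 x : qpi x = 0 -> exists w, x = phi w.
Proof.
move=> h; have : qpi x = qpi 0 by rewrite h /qpi cls0.
by move/cls_eq => [w hw]; exists w; rewrite -hw subr0.
Qed.
Lemma qpi_im w : qpi (phi w) = 0.
Proof. by rewrite cls0; apply/cls_eq; exists w; rewrite subr0. Qed.
Lemma qpiB x y : qpi x - qpi y = qpi (x - y).
Proof.
have := qpi_lin (-1) y x; rewrite !scaleN1r => E.
by rewrite [x - y]addrC E addrC.
Qed.
End QIm.

Lemma zero_lin (U N : lmodType R) : linP (fun _ : U => (0 : N)).
Proof. by move=> *; rewrite scaler0 addr0. Qed.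
Definition zl (U N : lmodType R) : {linear U -> N} := mkl (@zero_lin U N).
Lemma linP_scale (U N : lmodType R) (f : U -> N) (c : R) : linP f -> linP (fun x => f (c *: x)).
Proof. by move=> l r x y; rewrite scalerDr scalerA mulrC -scalerA l. Qed.
Lemma tens_extP (U V T N : lmodType R) (t : U -> V -> T) (k1 k2 : T -> N) :
  linP k1 -> linP k2 -> is_tensor t -> (forall u v, k1 (t u v) = k2 (t u v)) -> forall x, k1 x = k2 x.
Proof. by move=> l1 l2 Ht H x; apply: (tens_ext (k1 := mkl l1) (k2 := mkl l2) Ht). Qed.

Lemma L1 (U V1 V2 V3 : lmodType R) (phi : {linear V1 -> V2}) (gam : {linear V2 -> V3}) (s : R)
  (E2 : forall b, gam b = 0 -> exists a, phi a = s *: b)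
  (E3 : forall a, gam (s *: phi a) = 0)
  (E4 : forall c, exists b, gam b = s *: c)
  (T1 T2 T3 : lmodType R) (t1 : U -> V1 -> T1) (t2 : U -> V2 -> T2) (t3 : U -> V3 -> T3) :
  is_tensor t1 -> is_tensor t2 -> is_tensor t3 ->
  forall (F : {linear T1 -> T2}) (G : {linear T2 -> T3}),
  (forall u a, F (t1 u a) = t2 u (phi a)) ->
  (forall u b, G (t2 u b) = t3 u (gam b)) ->
  [/\ (forall y, G y = 0 -> exists x, F x = (s * s) *: y),
      (forall x, G (s *: F x) = 0) &
      (forall z, exists y, G y = s *: z)].
Proof.
move=> H1 H2 H3 F G HF HG.
have tb2 := H2.1; have tb3 := H3.1.
split.
-
  pose bc c := proj1_sig (cid (E4 c)).
  have hbc c : gam (bc c) = s *: c by rewrite /bc; case: (cid _).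
  pose Q := qim F.
  pose ph u c : Q := qpi F (t2 u (s *: bc c)).
  have key u b1 b2 : gam b1 = gam b2 -> qpi F (t2 u (s *: b1)) = qpi F (t2 u (s *: b2)).
    move=> e; apply/eqP; rewrite -subr_eq0 qpiB -(bil_Br tb2) -scalerBr.
    have [a ha] : exists a, phi a = s *: (b1 - b2).
      by apply: E2; rewrite linearB e subrr.
    by rewrite -ha -HF qpi_im.
  have phb : bilinear_map ph.
    split.
    - by move=> r m1 m2 a; rewrite /ph (tb2.1) qpi_lin.
    - move=> r m a1 a2; rewrite /ph -qpi_lin -(tb2.2).
      rewrite scalerA [r * s]mulrC -scalerA -scalerDr; apply: key.
      by rewrite linearP !hbc scalerDr !scalerA mulrC.
  have [[k hk] _] := H3.2 _ _ phb.
  have E : forall y, k (G y) = qpi F ((s * s) *: y).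
    have k1l : linP (fun y => k (G y)) by move=> r x y; rewrite !linearP.
    have k2l : linP (fun y => qpi F ((s * s) *: y)).
      exact: linP_scale (@qpi_lin _ _ F).
    move=> y; apply: (tens_extP k1l k2l H2) => u b.
    rewrite HG hk /ph.
    rewrite -(bil_Zr tb2) -scalerA.
    by apply: key; rewrite hbc linearZ.
  move=> y Gy; have := E y; rewrite Gy linear0 => /esym/qpi0 [w hw].
  by exists w.
- move=> x.
  have k1l : linP (fun x => G (s *: F x)).
    by move=> r x1 y1; rewrite linearP scalerDr scalerA mulrC -scalerA linearP.
  apply: (tens_extP k1l (@zero_lin _ _) H1) => u a.
  by rewrite HF -(bil_Zr tb2) HG E3 (bil_0r tb3).
- move=> z.
  have k1l : linP (fun z => qpi G (s *: z)).
    exact: linP_scale (@qpi_lin _ _ G).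
  have E : qpi G (s *: z) = 0.
    apply: (tens_extP k1l (@zero_lin _ _) H3) => u c.
    rewrite -(bil_Zr tb3); have [b <-] := E4 c.
    by rewrite -HG qpi_im.
  by have [w hw] := qpi0 E; exists w.
Qed.
End Gen.

Lemma sum_pred1_seq (I : eqType) (N : nmodType) (D : seq I) i (F : I -> N) :
  uniq D -> i \in D -> \sum_(j <- D | i == j) F j = F i.
Proof.
move=> uD iD; rewrite (big_rem i) //= eqxx big1_seq ?addr0 // => j /andP[/eqP eij jD].
by move: jD; rewrite -eij mem_rem_uniqF.
Qed.

Section Fin.
Variables (R : comPzRingType) (M : lmodType R).

Section Coef.
Variable W : lmodType R.
Definition coef (l : seq (M * W)) (m : M) : W := \sum_(x <- l | x.1 == m) x.2.
Definition fscale (r : R) (l : seq (M * W)) := map (fun x => (x.1, r *: x.2)) l.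
Lemma coef_cat l1 l2 m : coef (l1 ++ l2) m = coef l1 m + coef l2 m.
Proof. by rewrite /coef big_cat. Qed.
Lemma coef_scale r l m : coef (fscale r l) m = r *: coef l m.
Proof. by rewrite /coef big_map scaler_sumr. Qed.
Lemma coef_nil m : coef [::] m = 0.
Proof. by rewrite /coef big_nil. Qed.
Lemma coef1 m' w m : coef [:: (m', w)] m = if m' == m then w else 0.
Proof. by rewrite /coef big_mkcond big_seq1. Qed.

Section Regroup.
Variables (N : zmodType) (h : M -> W -> N).
Hypotheses (h0 : forall m, h m 0 = 0) (hD : forall m a b, h m (a + b) = h m a + h m b).
Definition lsum (l : seq (M * W)) : N := \sum_(x <- l) h x.1 x.2.
Lemma lsum_coef l (D : seq M) : uniq D -> {subset map fst l <= D} ->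
  lsum l = \sum_(m <- D) h m (coef l m).
Proof.
move=> uD sub.
have E1 : lsum l = \sum_(x <- l) \sum_(m <- D) (if x.1 == m then h m x.2 else 0).
  rewrite /lsum big_seq_cond [RHS]big_seq_cond; apply: eq_bigr => x /andP[xl _].
  rewrite -big_mkcond sum_pred1_seq //; apply: sub; exact: map_f.
rewrite E1 exchange_big; apply: eq_bigr => m _.
rewrite -big_mkcond /coef.
by rewrite (big_morph (h m) (hD m) (h0 m)).
Qed.
Lemma lsum_eq l1 l2 : (forall m, coef l1 m = coef l2 m) -> lsum l1 = lsum l2.
Proof.
move=> e; set D := undup (map fst (l1 ++ l2)).
have uD : uniq D by apply: undup_uniq.
rewrite (@lsum_coef l1 D) ?(@lsum_coef l2 D) //.
- by apply: eq_bigr => m _; rewrite e.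
- by move=> x xl; rewrite mem_undup map_cat mem_cat xl orbT.
- by move=> x xl; rewrite mem_undup map_cat mem_cat xl.
Qed.
Lemma lsum_cat l1 l2 : lsum (l1 ++ l2) = lsum l1 + lsum l2.
Proof. by rewrite /lsum big_cat. Qed.
End Regroup.

Definition fdata : qdata R.
refine (@QData R (seq (M * W)) (fun l1 l2 => forall m, coef l1 m = coef l2 m)
  cat (fscale (-1)) [::] fscale _ _ _ _ _ _ _ _ _ _ _ _ _ _).
- by [].
- by move=> x y H m; rewrite H.
- by move=> x y z H1 H2 m; rewrite H1.
- by move=> x x' y y' H1 H2 m; rewrite !coef_cat H1 H2.
- by move=> x x' H m; rewrite !coef_scale H.
- by move=> r x x' H m; rewrite !coef_scale H.
- by move=> x y z m; rewrite !coef_cat addrA.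
- by move=> x y m; rewrite !coef_cat addrC.
- by move=> x m; rewrite coef_cat coef_nil add0r.
- by move=> x m; rewrite coef_cat coef_scale coef_nil scaleN1r addNr.
- by move=> a b x m; rewrite !coef_scale scalerA.
- by move=> x m; rewrite coef_scale scale1r.
- by move=> a x y m; rewrite !(coef_scale, coef_cat) scalerDr.
- by move=> a b x m; rewrite !(coef_scale, coef_cat) scalerDl.
Defined.

Definition FinQ : lmodType R := quot fdata.
Definition fcls (l : seq (M * W)) : FinQ := @cls _ fdata l.
Lemma fdata_add l1 l2 : qadd fdata l1 l2 = l1 ++ l2. Proof. by []. Qed.
Lemma fdata_scale r l : qscale fdata r l = fscale r l. Proof. by []. Qed.
Lemma fcls_eq l1 l2 : fcls l1 = fcls l2 <-> forall m, coef l1 m = coef l2 m.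
Proof. exact: cls_eq. Qed.
Lemma fclsD l1 l2 : fcls l1 + fcls l2 = fcls (l1 ++ l2).
Proof. exact: clsD'. Qed.
Lemma fclsZ r l : r *: fcls l = fcls (fscale r l).
Proof. exact: clsZ. Qed.
Lemma fcls0 : fcls [::] = 0.
Proof. by []. Qed.

Definition sing (m : M) (w : W) : FinQ := fcls [:: (m, w)].
Lemma sing_lin m : linP (sing m).
Proof.
move=> r a b; rewrite /sing fclsZ fclsD; apply/fcls_eq => m'.
by rewrite coef_cat coef_scale !coef1; case: (m == m'); rewrite ?scaler0 ?addr0.
Qed.
Lemma sing0 m : sing m 0 = 0.
Proof. by rewrite -fcls0; apply/fcls_eq => m'; rewrite coef1 coef_nil; case: ifP. Qed.
Lemma singD m a b : sing m (a + b) = sing m a + sing m b.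
Proof. by have := sing_lin m 1 a b; rewrite !scale1r. Qed.
Lemma singZ m r a : sing m (r *: a) = r *: sing m a.
Proof. by have := sing_lin m r a 0; rewrite !addr0 sing0 addr0. Qed.
Lemma fclsE l : fcls l = \sum_(x <- l) sing x.1 x.2.
Proof.
elim: l => [|x l IH]; first by rewrite big_nil.
by rewrite big_cons -IH /sing fclsD; case: x.
Qed.
Lemma fcls_ind (P : FinQ -> Prop) : (forall l, P (fcls l)) -> forall q, P q.
Proof. move=> H; exact: (@quot_ind _ fdata P H). Qed.

Section FSum.
Variables (N : lmodType R) (h : M -> W -> N).
Hypotheses (hl : forall m, linP (h m)).
Lemma hl0 m : h m 0 = 0.
Proof.
have := hl m 1 0 0; rewrite !scale1r addr0 => E.
by apply: (@addrI _ (h m 0)); rewrite addr0 -E.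
Qed.
Lemma hlD m a b : h m (a + b) = h m a + h m b.
Proof. by have := hl m 1 a b; rewrite !scale1r. Qed.
Lemma hlZ m r a : h m (r *: a) = r *: h m a.
Proof. by have := hl m r a 0; rewrite !addr0 hl0 addr0. Qed.
Definition fsum (q : FinQ) : N := lsum h (rep q).
Lemma fsumE l : fsum (fcls l) = \sum_(x <- l) h x.1 x.2.
Proof.
rewrite /fsum; apply: (lsum_eq hl0 hlD).
exact: (repK (d := fdata) l).
Qed.
Lemma fsum_lin : linP fsum.
Proof.
move=> r; elim/fcls_ind => l1; elim/fcls_ind => l2.
rewrite fclsZ fclsD !fsumE big_cat big_map scaler_sumr /=.
by congr (_ + _); apply: eq_bigr => x _; rewrite hlZ.
Qed.
Lemma fsum_sing m w : fsum (sing m w) = h m w.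
Proof. by rewrite /sing fsumE big_seq1. Qed.
End FSum.
End Coef.

(* the free module *)
Definition P := FinQ R^o.
Definition delta (m : M) : P := sing m (1 : R^o).
Lemma sing_delta m (r : R^o) : sing m r = r *: delta m.
Proof. by rewrite /delta -singZ /GRing.scale /= mulr1. Qed.

Lemma pi_hl : forall m : M, linP (fun r : R^o => r *: m).
Proof. by move=> m r a b; rewrite scalerDl scalerA. Qed.
Definition piP (p : P) : M := fsum (fun m (r : R^o) => r *: m) p.
Lemma piP_lin : linP piP.
Proof. exact: (fsum_lin pi_hl). Qed.
Lemma piP_delta m : piP (delta m) = m.
Proof. by rewrite /piP (fsum_sing pi_hl) scale1r. Qed.

(* model of P (x) W *)
Section PW.
Variable W : lmodType R.
Lemma tf_hl (w : W) : forall m : M, linP (fun r : R^o => sing m (r *: w)).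
Proof. by move=> m r a b; rewrite -sing_lin scalerDl scalerA. Qed.
Definition tfin (p : P) (w : W) : FinQ W := fsum (fun m (r : R^o) => sing m (r *: w)) p.
Lemma tfinE l w : tfin (fcls l) w = \sum_(x <- l) sing x.1 (x.2 *: w).
Proof. by rewrite /tfin (fsumE (tf_hl w)). Qed.
Lemma tfin_delta m w : tfin (delta m) w = sing m w.
Proof. by rewrite /tfin (fsum_sing (tf_hl w)) scale1r. Qed.

Lemma tfin_bil : bilinear_map tfin.
Proof.
split.
- move=> r p1 p2 w; exact: (fsum_lin (tf_hl w)).
- move=> r; elim/fcls_ind => l a1 a2.
  rewrite !tfinE scaler_sumr -big_split /=; apply: eq_bigr => x _.
  by rewrite scalerDr scalerA mulrC -scalerA singD singZ.
Qed.

Lemma tfin_tensor : is_tensor tfin.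
Proof.
split; first exact: tfin_bil.
move=> N h hb; split.
- have hl : forall m, linP (h (delta m)).
    by move=> m r a b; rewrite (hb.2).
  exists (mkl (fsum_lin hl)) => p w.
  elim/fcls_ind: p => l.
  rewrite tfinE raddf_sum fclsE.
  rewrite (big_morph (fun p => h p w) (fun a b => bil_Dl hb a b w) (bil_0l hb w)).
  apply: eq_bigr => x _; rewrite [LHS](fsum_sing hl) (bil_Zr hb) sing_delta (bil_Zl hb).
  by [].
- move=> k1 k2 h1 h2; elim/fcls_ind => l.
  rewrite fclsE !raddf_sum; apply: eq_bigr => x _.
  by rewrite -tfin_delta; exact: (etrans (h1 _ _) (esym (h2 _ _))).
Qed.
End PW.
End Fin.

Section FSumMore.
Variables (R : comPzRingType) (M W N : lmodType R) (h : M -> W -> N).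
Hypothesis hl : forall m, linP (h m).
Lemma fsumD x y : fsum h (x + y) = fsum h x + fsum h y.
Proof. by have := fsum_lin hl 1 x y; rewrite !scale1r. Qed.
Lemma fsum0 : fsum h 0 = 0.
Proof.
have := fsum_lin hl 1 0 0; rewrite !scale1r addr0 => E.
by apply: (@addrI _ (fsum h 0)); rewrite addr0 -E.
Qed.
Lemma fsum_sum (I : Type) (r : seq I) (F : I -> FinQ M W) :
  fsum h (\sum_(i <- r) F i) = \sum_(i <- r) fsum h (F i).
Proof. exact: (big_morph _ fsumD fsum0). Qed.
End FSumMore.

Section FinMap.
Variables (R : comPzRingType) (M W1 W2 : lmodType R) (phi : {linear W1 -> W2}).
Lemma fm_hl : forall m : M, linP (fun w => sing m (phi w)).
Proof. by move=> m r a b; rewrite linearP sing_lin. Qed.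
Definition finmap (q : FinQ M W1) : FinQ M W2 := fsum (fun m w => sing m (phi w)) q.
Lemma finmap_lin : linP finmap.
Proof. exact: (fsum_lin fm_hl). Qed.
Lemma finmap_tfin p w : finmap (tfin p w) = tfin p (phi w).
Proof.
elim/fcls_ind: p => l; rewrite !tfinE /finmap fsum_sum //; last exact: fm_hl.
by apply: eq_bigr => x _; rewrite (fsum_sing fm_hl) linearZ.
Qed.
Lemma finmap_fcls l : finmap (fcls l) = fcls (map (fun x => (x.1, phi x.2)) l).
Proof. by rewrite /finmap (fsumE fm_hl) fclsE big_map. Qed.
Lemma finmap_inj (s : R) : (forall a, phi a = 0 -> s *: a = 0) ->
  forall q, finmap q = 0 -> s *: q = 0.
Proof.
move=> E; elim/fcls_ind => l; rewrite finmap_fcls -fcls0 => /fcls_eq H.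
rewrite fclsZ -fcls0; apply/fcls_eq => m; rewrite coef_scale coef_nil; apply: E.
by have := H m; rewrite coef_nil /coef big_map /= -linear_sum.
Qed.
End FinMap.

Section Kernel.
Variables (R : comPzRingType) (V N : lmodType R) (kap : {linear V -> N}).
Definition KX := {v : V | kap v = 0}.
Lemma kaddP (x y : KX) : kap (proj1_sig x + proj1_sig y) = 0.
Proof. by rewrite linearD (proj2_sig x) (proj2_sig y) addr0. Qed.
Lemma koppP (x : KX) : kap (- proj1_sig x) = 0.
Proof. by rewrite linearN (proj2_sig x) oppr0. Qed.
Lemma kscaleP r (x : KX) : kap (r *: proj1_sig x) = 0.
Proof. by rewrite linearZ_LR (proj2_sig x) scaler0. Qed.
Definition kadd (x y : KX) : KX := exist _ (proj1_sig x + proj1_sig y) (kaddP x y).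
Definition kopp (x : KX) : KX := exist _ (- proj1_sig x) (koppP x).
Definition kzero : KX := exist _ 0 (linear0 kap).
Definition kscale (r : R) (x : KX) : KX := exist _ (r *: proj1_sig x) (kscaleP r x).
Definition kdata : qdata R.
refine (@QData R KX (@eq KX) kadd kopp kzero kscale _ _ _ _ _ _ _ _ _ _ _ _ _ _).
- by [].
- by move=> x y ->.
- by move=> x y z -> ->.
- by move=> x x' y y' -> ->.
- by move=> x x' ->.
- by move=> r x x' ->.
- by move=> x y z; apply: sig_eqP; rewrite /= addrA.
- by move=> x y; apply: sig_eqP; rewrite /= addrC.
- by move=> x; apply: sig_eqP; rewrite /= add0r.
- by move=> x; apply: sig_eqP; rewrite /= addNr.
- by move=> a b x; apply: sig_eqP; rewrite /= scalerA.
- by move=> x; apply: sig_eqP; rewrite /= scale1r.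
- by move=> a x y; apply: sig_eqP; rewrite /= scalerDr.
- by move=> a b x; apply: sig_eqP; rewrite /= scalerDl.
Defined.
Definition Kmod : lmodType R := quot kdata.
Definition iota (q : Kmod) : V := proj1_sig (rep q).
Lemma iota_cls x : iota (@cls _ kdata x) = proj1_sig x.
Proof. by rewrite /iota (repK (d := kdata) x). Qed.
Lemma iota_lin : linP iota.
Proof.
move=> r; elim/quot_ind => x; elim/quot_ind => y.
by rewrite clsZ clsD' !iota_cls.
Qed.
Lemma iota_inj q : iota q = 0 -> q = 0.
Proof.
elim/quot_ind: q => x; rewrite iota_cls => h.
have -> : x = kzero by apply: sig_eqP.
by [].
Qed.
Lemma iota_im v : kap v = 0 -> exists q, iota q = v.
Proof. by move=> h; exists (@cls _ kdata (exist _ v h)); rewrite iota_cls. Qed.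
Lemma kap_iota q : kap (iota q) = 0.
Proof. by rewrite /iota; case: (rep q). Qed.
End Kernel.

Lemma linP_comp (R : comPzRingType) (V1 V2 V3 : lmodType R) (F : {linear V2 -> V3}) (G : {linear V1 -> V2}) :
  linP (fun x => F (G x)).
Proof. by move=> r x y; rewrite (linearP G) (linearP F). Qed.

Section Main.
Variables (R : comPzRingType) (S : R -> Prop).
Hypothesis HS : Defs.multiplicative S.
Lemma SM a b : S a -> S b -> S (a * b). Proof. exact: HS.2. Qed.
Lemma S1 : S 1. Proof. exact: HS.1. Qed.

Lemma combine (X Y Z : lmodType R) (f : {linear X -> Y}) (g : {linear Y -> Z}) s1 s2 s3 s4 :
  S s1 -> S s2 -> S s3 -> S s4 ->
  (forall a, f a = 0 -> s1 *: a = 0) ->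
  (forall b, g b = 0 -> exists a, f a = s2 *: b) ->
  (forall a, g (s3 *: f a) = 0) ->
  (forall c, exists b, g b = s4 *: c) ->
  uS_exact S f g.
Proof.
move=> h1 h2 h3 h4 I1 I2 I3 I4.
exists (s1 * s2 * s3 * s4); first by do !apply: SM.
split.
- move=> a /I1 e; have -> : s1 * s2 * s3 * s4 = (s2 * s3 * s4) * s1 by ring.
  by rewrite -scalerA e scaler0.
- move=> b /I2 [a e]; exists ((s1 * s3 * s4) *: a).
  rewrite linearZ_LR e scalerA; congr (_ *: _); ring.
- move=> a; have -> : s1 * s2 * s3 * s4 = (s1 * s2 * s4) * s3 by ring.
  by rewrite -scalerA linearZ_LR I3 scaler0.
- move=> c; have [b e] := I4 c; exists ((s1 * s2 * s3) *: b).
  rewrite linearZ_LR e scalerA; congr (_ *: _); ring.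
Qed.

Lemma dir1 (A B C : lmodType R) (f : {linear A -> B}) (g : {linear B -> C}) :
  uS_exact S f g -> uS_flat S C -> uS_pure S f g.
Proof.
move=> [s0 Ss0 [E1 E2 E3 E4]] HC M TA TB TC tA tB tC HA HB HCt fT gT HfT HgT.
have [L2 L3 L4] := L1 E2 E3 E4 HA HB HCt HfT HgT.
suff [s1 Ss1 I1] : exists2 s1, S s1 & forall x, fT x = 0 -> s1 *: x = 0.
  by apply: (combine Ss1 _ Ss0 Ss0 I1 L2 L3 L4); apply: SM.
(* the free presentation *)
pose pil : {linear P M -> M} := mkl (@piP_lin R M).
pose K := Kmod pil.
pose iol : {linear K -> P M} := mkl (@iota_lin _ _ _ pil).
have Ek1 : forall a : K, iol a = 0 -> 1 *: a = 0.
  by move=> a /iota_inj ->; rewrite scaler0.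
have Ek2 : forall b : P M, pil b = 0 -> exists a, iol a = 1 *: b.
  by move=> b /iota_im [q hq]; exists q; rewrite scale1r.
have Ek3 : forall a : K, pil (1 *: iol a) = 0.
  by move=> a; rewrite scale1r; apply: kap_iota.
have Ek4 : forall c : M, exists b, pil b = 1 *: c.
  by move=> c; exists (delta c); rewrite scale1r /= mklE piP_delta.
have HexK : uS_exact S iol pil by exists 1; [exact: S1 | split].
have tKA := Tens_is_tensor K A; have tKB := Tens_is_tensor K B; have tKC := Tens_is_tensor K C.
have tPA := tfin_tensor M A; have tPB := tfin_tensor M B; have tPC := tfin_tensor M C.
have [fK HfK] := tens_map2 f tKA tKB.1.
have [gK HgK] := tens_map2 g tKB tKC.1.
pose fP : {linear FinQ M A -> FinQ M B} := mkl (finmap_lin f).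
pose gP : {linear FinQ M B -> FinQ M C} := mkl (finmap_lin g).
have HfP : forall p a, fP (tfin p a) = tfin p (f a) by move=> p a; exact: finmap_tfin.
have HgP : forall p b, gP (tfin p b) = tfin p (g b) by move=> p b; exact: finmap_tfin.
have [iA HiA] := tens_map1 iol tKA tPA.1.
have [iB HiB] := tens_map1 iol tKB tPB.1.
have [iC HiC] := tens_map1 iol tKC tPC.1.
have [pA HpA] := tens_map1 pil tPA HA.1.
have [pB HpB] := tens_map1 pil tPB HB.1.
have [pC HpC] := tens_map1 pil tPC HCt.1.
have [_ cA3 cA4] := L1 Ek2 Ek3 Ek4 (tens_flip tKA) (tens_flip tPA) (tens_flip HA)
  (F := iA) (G := pA) (fun a k => HiA k a) (fun a p => HpA p a).
have [cB2 _ _] := L1 Ek2 Ek3 Ek4 (tens_flip tKB) (tens_flip tPB) (tens_flip HB)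
  (F := iB) (G := pB) (fun a k => HiB k a) (fun a p => HpB p a).
have [rK2 _ _] := L1 E2 E3 E4 tKA tKB tKC HfK HgK.
have [_ rP3 _] := L1 E2 E3 E4 tPA tPB tPC HfP HgP.
have [sc Ssc [Ic1 _ _ _]] := HC K (P M) M iol pil HexK _ _ _ _ _ _ tKC tPC HCt iC pC HiC HpC.
have injP := finmap_inj E1.
have c1 : forall y, pB (fP y) = fT (pA y).
  apply: (tens_extP (linP_comp _ _) (linP_comp _ _) tPA).
  by move=> p a; rewrite HfP HpB HpA HfT.
have c2 : forall w, iB (fK w) = fP (iA w).
  apply: (tens_extP (linP_comp _ _) (linP_comp _ _) tKA).
  by move=> k a; rewrite HfK HiB HiA HfP.
have c3 : forall z, gP (iB z) = iC (gK z).
  apply: (tens_extP (linP_comp _ _) (linP_comp _ _) tKB).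
  by move=> k b; rewrite HgK HiC HiB HgP.
pose c := (s0 * s0) * (sc * s0) * (1 * 1).
exists (s0 * c); first exact: (SM Ss0 (SM (SM (SM Ss0 Ss0) (SM Ssc Ss0)) (SM S1 S1))).
move=> x Hx.
have [y hy] := cA4 x.
have h1 : pB (fP y) = 0 by rewrite c1 hy linearZ_LR Hx scaler0.
have [z hz] := cB2 _ h1.
have e : s0 *: gP (fP y) = 0 by rewrite -linearZ_LR rP3.
have h2 : iC (s0 *: gK z) = 0.
  by rewrite linearZ_LR -c3 hz linearZ_LR scalerA mulrC -scalerA e scaler0.
have h3 := Ic1 _ h2.
have h4 : gK ((sc * s0) *: z) = 0 by rewrite linearZ_LR -scalerA.
have [w hw] := rK2 _ h4.
have h5 : fP (iA w - c *: y) = 0.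
  by rewrite linearB linearZ_LR -c2 hw (linearZ_LR iB) (linearZ_LR iB) hz !scalerA subrr.
have h6 := injP _ _ h5.
have h7 : pA (iA w) = 0 by have := cA3 w; rewrite scale1r.
have := congr1 pA h6; rewrite linear0 (linearZ_LR pA) (linearB pA) (linearZ_LR pA) h7 hy sub0r scale1r.
by rewrite scalerN scalerA => /eqP; rewrite oppr_eq0 => /eqP.
Qed.



Lemma dir2 (A B C : lmodType R) (f : {linear A -> B}) (g : {linear B -> C}) :
  uS_exact S f g -> uS_flat S B -> uS_pure S f g -> uS_flat S C.
Proof.
move=> [s0 Ss0 [E1 E2 E3 E4]] HBf Hpure X Y Z f' g' Hex' TX TY TZ tX tY tZ HX HY HZ fT gT HfT HgT.
have Hex'0 := Hex'.
move: Hex' => [s0' Ss0' [E1' E2' E3' E4']].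
have [L2 L3 L4] := L1 E2' E3' E4' (tens_flip HX) (tens_flip HY) (tens_flip HZ)
  (F := fT) (G := gT) (fun c x => HfT x c) (fun c y => HgT y c).
suff [s1 Ss1 I1] : exists2 s1, S s1 & forall x, fT x = 0 -> s1 *: x = 0.
  by apply: (combine Ss1 _ Ss0' Ss0' I1 L2 L3 L4); apply: SM.
have tXA := Tens_is_tensor X A; have tXB := Tens_is_tensor X B.
have tYA := Tens_is_tensor Y A; have tYB := Tens_is_tensor Y B.
have tZA := Tens_is_tensor Z A; have tZB := Tens_is_tensor Z B.
have [fX HfX] := tens_map2 f tXA tXB.1.
have [gX HgX] := tens_map2 g tXB HX.1.
have [fY HfY] := tens_map2 f tYA tYB.1.
have [gY HgY] := tens_map2 g tYB HY.1.
have [fZ HfZ] := tens_map2 f tZA tZB.1.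
have [gZ HgZ] := tens_map2 g tZB HZ.1.
have [f'A Hf'A] := tens_map1 f' tXA tYA.1.
have [g'A Hg'A] := tens_map1 g' tYA tZA.1.
have [f'B Hf'B] := tens_map1 f' tXB tYB.1.
have [g'B Hg'B] := tens_map1 g' tYB tZB.1.
have [_ rX3 rX4] := L1 E2 E3 E4 tXA tXB HX HfX HgX.
have [rY2 _ _] := L1 E2 E3 E4 tYA tYB HY HfY HgY.
have [sz Ssz [Iz _ _ _]] := Hpure Z _ _ _ _ _ _ tZA tZB HZ fZ gZ HfZ HgZ.
have [cA2 _ _] := L1 E2' E3' E4' (tens_flip tXA) (tens_flip tYA) (tens_flip tZA)
  (F := f'A) (G := g'A) (fun a x => Hf'A x a) (fun a y => Hg'A y a).
have [_ cB3 _] := L1 E2' E3' E4' (tens_flip tXB) (tens_flip tYB) (tens_flip tZB)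
  (F := f'B) (G := g'B) (fun a x => Hf'B x a) (fun a y => Hg'B y a).
have [sb Ssb [Ib _ _ _]] := HBf X Y Z f' g' Hex'0 _ _ _ _ _ _ tXB tYB tZB f'B g'B Hf'B Hg'B.
have d1 : forall u, gY (f'B u) = fT (gX u).
  apply: (tens_extP (linP_comp _ _) (linP_comp _ _) tXB).
  by move=> x b; rewrite Hf'B HgY HgX HfT.
have d2 : forall v, fZ (g'A v) = g'B (fY v).
  apply: (tens_extP (linP_comp _ _) (linP_comp _ _) tYA).
  by move=> y a; rewrite Hg'A HfZ HfY Hg'B.
have d3 : forall w, f'B (fX w) = fY (f'A w).
  apply: (tens_extP (linP_comp _ _) (linP_comp _ _) tXA).
  by move=> x a; rewrite HfX Hf'B Hf'A HfY.
pose c := (s0' * s0') * (sz * s0') * (s0 * s0).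
exists ((s0 * sb) * (c * s0)).
  exact: (SM (SM Ss0 Ssb) (SM (SM (SM (SM Ss0' Ss0') (SM Ssz Ss0')) (SM Ss0 Ss0)) Ss0)).
move=> x Hx.
have [u hu] := rX4 x.
have h1 : gY (f'B u) = 0 by rewrite d1 hu (linearZ_LR fT) Hx scaler0.
have [v hv] := rY2 _ h1.
have e : s0' *: g'B (f'B u) = 0 by rewrite -(linearZ_LR g'B) cB3.
have h2 : fZ (s0' *: g'A v) = 0.
  by rewrite (linearZ_LR fZ) d2 hv (linearZ_LR g'B) scalerA mulrC -scalerA e scaler0.
have h3 := Iz _ h2.
have h4 : g'A ((sz * s0') *: v) = 0 by rewrite (linearZ_LR g'A) -scalerA.
have [w hw] := cA2 _ h4.
have h5 : f'B (fX w - c *: u) = 0.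
  by rewrite (linearB f'B) (linearZ_LR f'B) d3 hw (linearZ_LR fY) (linearZ_LR fY) hv !scalerA subrr.
have h6 := Ib _ h5.
have ea : s0 *: gX (fX w) = 0 by rewrite -(linearZ_LR gX) rX3.
have := congr1 gX h6; rewrite linear0 (linearZ_LR gX) (linearB gX) (linearZ_LR gX) hu.
move=> h7; have := congr1 (fun t => s0 *: t) h7; rewrite /= scaler0 scalerA scalerBr.
have -> : (s0 * sb) *: gX (fX w) = 0 by rewrite [s0 * sb]mulrC -scalerA ea scaler0.
rewrite sub0r !scalerA => /eqP; rewrite oppr_eq0 => /eqP.
by rewrite !mulrA.
Qed.

End Main.

End UsHelpers.
Unset Implicit Arguments. Set Strict Implicit. Set Printing Implicit Defensive.

Theorem proposition2p5 (R : comPzRingType) (S : R -> Prop)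
  (A B C : lmodType R) (f : {linear A -> B}) (g : {linear B -> C}) :
  multiplicative S ->
  uS_exact S f g ->
  uS_flat S B ->
  (uS_flat S C <-> uS_pure S f g).
Proof.
move=> HS Hex HB; split.
- exact: (UsHelpers.dir1 HS Hex).
- exact: (UsHelpers.dir2 HS Hex HB).
Qed.
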